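(* Let $T\in\mathcal{L}(\mathcal{H})$ have closed range and satisfy $T^\dagger T(T+T^* )=(T+T^* )T^\dagger T$. Then $T$ is a hypo-EP operator.
   Context: $\mathcal{H}$ is a Hilbert space, $\mathcal{L}(\mathcal{H})$ the bounded operators on it. For $T$ with closed range, $T^\dagger$ is its Moore–Penrose inverse (unique solution of $TT^\dagger T=T$, $T^\dagger TT^\dagger=T^\dagger$, $(T^\dagger T)^*=T^\dagger T$, $(TT^\dagger)^*=TT^\dagger$). $T$ is hypo-EP if $T$ has closed range and $T^\dagger T-TT^\dagger\ge 0$, equivalently $R(T)\subset R(T^* )$, where $R(\cdot)$ denotes range. *)

(* Defs.v *)
From HB Require Import structures.
From mathcomp Require Import all_boot all_order all_algebra.
From mathcomp Require Import complex.
From mathcomp Require Import reals.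
Set Implicit Arguments. Unset Strict Implicit. Unset Printing Implicit Defensive.
Import Order.TTheory GRing.Theory Num.Theory.
Local Open Scope ring_scope.
Local Open Scope complex_scope.

(* A complex Hilbert space is modelled by a module H over C = R[i]
   (R : realType, the real numbers), with an inner product ip that is
   linear in the first argument and conjugate-symmetric, positive definite,
   and such that H is complete for the induced norm. *)
Section Hilbert.
Variables (R : realType) (H : lmodType R[i]).
Variable ip : H -> H -> R[i].

Definition inner_product : Prop :=
  [/\ (forall (a : R[i]) (x z y : H), ip (a *: x + z) y = a * ip x y + ip z y),
      (forall x y, ip y x = (ip x y)^*),
      (forall x, 0 <= ip x x) &
      (forall x, ip x x = 0 -> x = 0)].

Definition hnorm (x : H) : R[i] := sqrtC (ip x x).

Definition hcvg (u : nat -> H) (l : H) : Prop :=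
  forall e : R[i], 0 < e -> exists N, forall n, (N <= n)%N -> hnorm (u n - l) < e.

Definition hcauchy (u : nat -> H) : Prop :=
  forall e : R[i], 0 < e -> exists N, forall m n,
    (N <= m)%N -> (N <= n)%N -> hnorm (u m - u n) < e.

Definition hilbert_space : Prop :=
  inner_product /\ forall u, hcauchy u -> exists l, hcvg u l.

Definition bounded_op (T : H -> H) : Prop :=
  linear T /\ exists M : R[i], forall x, hnorm (T x) <= M * hnorm x.

Definition is_adjoint (T Ts : H -> H) : Prop :=
  forall x y, ip (T x) y = ip x (Ts y).

Definition closed_range (T : H -> H) : Prop :=
  forall (u : nat -> H) (l : H), (forall n, exists x, u n = T x) ->
    hcvg u l -> exists x, T x = l.

Definition is_MP_inverse (T Td : H -> H) : Prop :=
  [/\ bounded_op Td,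
      (forall x, T (Td (T x)) = T x),
      (forall x, Td (T (Td x)) = Td x),
      (forall x y, ip (Td (T x)) y = ip x (Td (T y))) &
      (forall x y, ip (T (Td x)) y = ip x (T (Td y)))].

Definition op_nonneg (A : H -> H) : Prop := forall x, 0 <= ip (A x) x.

Definition hypo_EP (T Td : H -> H) : Prop :=
  closed_range T /\ op_nonneg (fun x => Td (T x) - T (Td x)).
End Hilbert.

(* Main.v *)
Require Import Defs.
From HB Require Import structures.
From mathcomp Require Import all_boot all_order all_algebra.
From mathcomp Require Import complex.
From mathcomp Require Import reals.
Import Order.TTheory GRing.Theory Num.Theory.
Local Open Scope ring_scope.
Local Open Scope complex_scope.

Lemma linB (R : realType) (H : lmodType R[i]) (T : H -> H) :
  linear T -> forall x y, T (x - y) = T x - T y.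
Proof. move=> lT x y.
have := lT (-1) y x. rewrite !scaleN1r [_ + x]addrC => ->. by rewrite addrC.
Qed.

Lemma linD (R : realType) (H : lmodType R[i]) (T : H -> H) :
  linear T -> forall x y, T (x + y) = T x + T y.
Proof. move=> lT x y. by have := lT 1 x y; rewrite !scale1r. Qed.

Section Aux.
Variables (R : realType) (H : lmodType R[i]) (ip : H -> H -> R[i]).
Hypothesis hip : inner_product ip.

Lemma ipB_l x z y : ip (x - z) y = ip x y - ip z y.
Proof. case: hip => h1 _ _ _. by rewrite addrC -scaleN1r h1 mulN1r addrC. Qed.

Lemma ipB_r y x z : ip y (x - z) = ip y x - ip y z.
Proof. case: hip => _ h2 _ _. by rewrite [LHS]h2 ipB_l rmorphB (h2 x y) (h2 z y). Qed.

Lemma ip0_l y : ip 0 y = 0.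
Proof. by rewrite -(subrr y) ipB_l subrr. Qed.

Lemma ip_nondeg z : (forall y, ip y z = 0) -> z = 0.
Proof. case: hip => _ _ _ h4 h. exact: h4. Qed.

Lemma ip_self_conj a : (ip a a)^* = ip a a.
Proof. case: hip => _ h2 _ _. by rewrite -h2. Qed.
End Aux.
Arguments ipB_l {R H ip}.
Arguments ipB_r {R H ip}.
Arguments ip0_l {R H ip}.
Arguments ip_nondeg {R H ip}.
Arguments ip_self_conj {R H ip}.

Theorem mainTheorem3 (R : realType) (H : lmodType R[i]) (ip : H -> H -> R[i])
  (T Ts Td : H -> H) :
  hilbert_space ip ->
  bounded_op ip T ->
  is_adjoint ip T Ts ->
  closed_range ip T ->
  is_MP_inverse ip T Td ->
  (forall x, Td (T (T x + Ts x)) = (T (Td (T x)) + Ts (Td (T x)))) ->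
  hypo_EP ip T Td.
Proof.
move=> [hip _] [lT _] hadj hcr [[lTd _] h1 h2 h3 h4] hyp.
have TB := @linB _ _ _ lT; have TD := @linD _ _ _ lT; have TdB := @linB _ _ _ lTd; have TdD := @linD _ _ _ lTd.
have PTs y : Td (T (Ts y)) = Ts y.
  apply/eqP; rewrite -subr_eq0; apply/eqP; apply: (ip_nondeg hip) => x.
  rewrite (ipB_r hip) -h3 -hadj -hadj h1 subrr //.
have PT x : Td (T (T x)) = T x.
  set u := T x - Td (T (T x)).
  have hu : u = Ts x - Ts (Td (T x)).
    have := hyp x; rewrite TD TdD PTs h1 => e.
    rewrite /u. have E : T x = Td (T (T x)) + Ts x - Ts (Td (T x)).
      rewrite e. rewrite -addrA subrr addr0 //.
    by rewrite {1}E addrC !addrA addNr add0r.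
  have Tu : T u = 0 by rewrite /u TB h1 subrr.
  have : ip u u = 0 by rewrite {2}hu (ipB_r hip) -!hadj Tu !(ip0_l hip) subrr.
  case: (hip) => _ _ _ h0 /h0 /eqP; rewrite subr_eq0 => /eqP //.
split => // x.
have PP : Td (T (Td (T x))) = Td (T x) by rewrite h2.
have QQ : T (Td (T (Td x))) = T (Td x) by rewrite h1.
have PQ : Td (T (T (Td x))) = T (Td x) by rewrite PT.
have e1 : ip (Td (T x)) x = ip (Td (T x)) (Td (T x)) by rewrite -h3 PP.
have e2 : ip (T (Td x)) x = ip (T (Td x)) (T (Td x)) by rewrite -h4 QQ.
have e3 : ip (T (Td x)) (Td (T x)) = ip (T (Td x)) (T (Td x)) by rewrite -h3 PQ e2.
have e4 : ip (Td (T x)) (T (Td x)) = ip (T (Td x)) (T (Td x)).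
  case: (hip) => _ hc _ _. by rewrite hc e3 (ip_self_conj hip).
have -> : ip (Td (T x) - T (Td x)) x =
          ip (Td (T x) - T (Td x)) (Td (T x) - T (Td x)).
  rewrite !(ipB_l hip) !(ipB_r hip) e1 e2 e3 e4.
  by rewrite opprB addrA subrK.
by case: (hip) => _ _ hp _.
Qed.
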